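(* There is an absolute constant $C$ such that for all integers $1\le r\le n$ and every graded function $f:\mathbb{I}_n^r\to\mathbb{R}^+$, there exists a real matrix $A$ with $n$ columns and at most $Cnr$ rows such that $\mu_A(J)=f(J)$ for all $J\in\mathbb{I}_n^r$.
   Context: $\mathbb{R}^+$ denotes the positive reals. For integers $i\le j$, $[i:j]=\{i,\dots,j\}$. For integers $r\le n$, $\mathbb{I}_n^r=\{[i:j]:1\le i\le j\le n,\ j<i+r\}$, and $\mathbb{I}_n=\mathbb{I}_n^n$. A function $f:\mathbb{I}_n^r\to\mathbb{R}^+$ is graded if for all $J,J'\in\mathbb{I}_n^r$ with $|J|<|J'|$ one has $f(J)/|J|>f(J')/|J'|$. For a matrix $A=[a_{ij}]$ with $n$ columns, its column-interval maximum prefix sum is $\mu_A:\mathbb{I}_n\to\mathbb{R}$, $\mu_A(J)=\max_{k\ge1}\sum_{i=1}^k\sum_{j\in J}a_{ij}$ (maximum over $k$ ranging over the row indices). *)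

(* Defs.v *)
From mathcomp Require Import all_boot all_order all_algebra.
From mathcomp Require Import reals.
Set Implicit Arguments. Unset Strict Implicit. Unset Printing Implicit Defensive.
Import Order.TTheory GRing.Theory Num.Theory.
Local Open Scope ring_scope.

(* The interval [i:j] of column indices (1-based), i.e. columns c : 'I_n with
   i <= c+1 <= j. *)
Definition in_interval (i j : nat) (n : nat) (c : 'I_n) : bool :=
  (i <= c.+1 <= j)%N.

Definition in_Inr (n r i j : nat) : Prop :=
  [/\ (1 <= i)%N, (i <= j)%N, (j <= n)%N & (j < i + r)%N].

Definition ilen (i j : nat) : nat := (j - i).+1.

(* f : I_n^r -> R^+ given as a function on pairs (i,j) (values outside I_n^r
   irrelevant).  Positivity and gradedness. *)
Definition positive_on (R : realFieldType) (n r : nat) (f : nat -> nat -> R) : Prop :=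
  forall i j, in_Inr n r i j -> 0 < f i j.

Definition graded (R : realFieldType) (n r : nat) (f : nat -> nat -> R) : Prop :=
  forall i j i' j', in_Inr n r i j -> in_Inr n r i' j' ->
    (ilen i j < ilen i' j')%N ->
    f i j / (ilen i j)%:R > f i' j' / (ilen i' j')%:R.

Definition prefix_sum (R : realFieldType) (m n : nat) (A : 'M[R]_(m.+1, n))
  (i j : nat) (k : 'I_m.+1) : R :=
  \sum_(a < m.+1 | (a <= k)%N) \sum_(c < n | in_interval i j c) A a c.

Definition mu (R : realFieldType) (m n : nat) (A : 'M[R]_(m.+1, n)) (i j : nat) : R :=
  \big[Num.max/prefix_sum A i j ord0]_(k < m.+1) prefix_sum A i j k.

(* Main.v *)
Require Import Defs.
From mathcomp Require Import all_boot all_order all_algebra.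
From mathcomp Require Import reals.
From mathcomp Require Import zify lra.
Import Order.TTheory GRing.Theory Num.Theory.
Local Open Scope ring_scope.

Lemma cnt_interval n i j : (1 <= i)%N ->
  (\sum_(c < n | (i <= c.+1 <= j)%N) 1)%N = ((minn n j).+1 - i)%N.
Proof.
move=> hi; elim: n => [|n IH]; first by rewrite big_ord0; lia.
rewrite big_mkcond big_ord_recr /= -big_mkcond IH; case: ifP => /= h; lia.
Qed.

Lemma sum_constQ (R : realFieldType) n (Q : pred 'I_n) (x : R) :
  \sum_(c | Q c) x = x *+ (\sum_(c | Q c) 1)%N.
Proof. by rewrite -sumrMnr; apply: eq_bigr => c _. Qed.

Lemma key (R : realFieldType) n r (f : nat -> nat -> R) i j i' j' :
  positive_on n r f -> graded n r f -> in_Inr n r i j -> in_Inr n r i' j' ->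
  let S := \sum_(c < n | in_interval i' j' c)
       (if in_interval i j c then f i j / (ilen i j)%:R else - f i j) in
  S <= f i' j' /\ (i = i' -> j = j' -> S = f i j).
Proof.
move=> pos gr hJ hJ' S.
have fpos := pos _ _ hJ; have fpos' := pos _ _ hJ'.
set a := f i j / (ilen i j)%:R.
set N1 := (\sum_(c < n | in_interval i' j' c && in_interval i j c) 1)%N.
set N2 := (\sum_(c < n | in_interval i' j' c && ~~ in_interval i j c) 1)%N.
have eS : S = a *+ N1 + (- f i j) *+ N2.
  rewrite /S (bigID (fun c => in_interval i j c)) /=.
  rewrite (eq_bigr (fun _ => a)); last by move=> c /andP[_ ->].
  rewrite [X in _ + X](eq_bigr (fun _ => - f i j)); last by move=> c /andP[_ /negbTE ->].
  by rewrite !sum_constQ.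
have hN1 : N1 = ((minn n (minn j j')).+1 - maxn i i')%N.
  rewrite /N1 -cnt_interval; last by case: hJ; lia.
  apply: eq_bigl => c; rewrite /in_interval.
  apply/idP/idP; [move=> /andP[/andP[h1 h2] /andP[h3 h4]] | move=> /andP[h1 h2]];
    apply/andP; try split; try (apply/andP; split); lia.
have hN12 : (N1 + N2 = (minn n j').+1 - i')%N.
  rewrite -cnt_interval; last by case: hJ'; lia.
  rewrite [in RHS](bigID (fun c => in_interval i j c)) /=.
  by congr (_ + _)%N; apply: eq_bigl => c.
have Lpos : (0 : R) < (ilen i j)%:R by rewrite ltr0n.
have aL : a *+ ilen i j = f i j.
  by rewrite /a -mulr_natr divfK // gt_eqF.
have a0 : 0 <= a by rewrite /a divr_ge0 // ltW.
clearbody N1 N2 S.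
case: hJ hJ' => h1 h2 h3 h4 [h1' h2' h3' h4'].
have N1L : (N1 <= ilen i j)%N by rewrite /ilen; lia.
case: (posnP N2) => hN2.
  rewrite eS hN2 mulr0n addr0.
  have [eL|ltL] := eqVneq N1 (ilen i j).
    have ei : i = i' by rewrite /ilen in eL; lia.
    have ej : j = j' by rewrite /ilen in eL; lia.
    subst i' j'; rewrite eL aL; split => //; exact: lexx.
  have N1L' : N1 = ilen i' j' by rewrite /ilen; lia.
  have lt : (ilen i' j' < ilen i j)%N by rewrite -N1L'; rewrite ltn_neqAle ltL N1L.
  have := gr _ _ _ _ (And4 h1' h2' h3' h4') (And4 h1 h2 h3 h4) lt.
  rewrite N1L' => hg; split; last first.
    move=> ei ej; subst i' j'; by rewrite -N1L' eqxx in ltL.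
  have L'pos : (0 : R) < (ilen i' j')%:R by rewrite ltr0n.
  rewrite -mulr_natr /a.
  rewrite -(ltr_pM2r L'pos) in hg.
  by rewrite divfK ?gt_eqF // in hg; apply: ltW.
split; last first.
  move=> ei ej; subst i' j'; exfalso; lia.
rewrite eS; apply: (le_trans _ (ltW fpos')).
have : a *+ N1 <= a *+ ilen i j by rewrite -[a *+ N1]mulr_natr -[a *+ ilen i j]mulr_natr ler_wpM2l // ler_nat.
have : f i j <= f i j *+ N2.
  clear eS hN12; case: N2 hN2 => // k _; rewrite mulrS lerDl mulrn_wge0 // ltW //.
rewrite aL mulNrn; lra.
Qed.

Definition inInrb (n r i j : nat) : bool :=
  [&& (1 <= i)%N, (i <= j)%N, (j <= n)%N & (j < i + r)%N].

Lemma inInrbP n r i j : reflect (in_Inr n r i j) (inInrb n r i j).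
Proof.
rewrite /inInrb; apply: (iffP idP).
  by move=> /and4P[? ? ? ?]; split.
by case=> *; apply/and4P; split.
Qed.

Definition Wf (R : realFieldType) n r (f : nat -> nat -> R) (k : nat) (c : 'I_n) : R :=
  let i := (k %/ r).+1 in let j := (k %/ r + k %% r).+1 in
  if inInrb n r i j then
    (if in_interval i j c then f i j / (ilen i j)%:R else - f i j) else 0.

Definition Wp (R : realFieldType) n r (f : nat -> nat -> R) (a : nat) (c : 'I_n) : R :=
  if a is a'.+1 then @Wf R n r f a' c else 0.
Arguments Wf {R n}.
Arguments Wp {R n}.

Lemma maxbig_ge (R : realFieldType) (I : eqType) (s : seq I) (F : I -> R) x0 k0 :
  k0 \in s -> F k0 <= \big[Num.max/x0]_(i <- s) F i.
Proof.
elim: s => [|y s IH] //; rewrite in_cons big_cons /= le_max.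
case/orP => [/eqP -> | /IH ->]; by rewrite ?lexx ?orbT.
Qed.

Theorem lemma6p5 :
  exists C : nat,
  forall (R : realType) (n r : nat) (f : nat -> nat -> R),
    (1 <= r)%N -> (r <= n)%N ->
    positive_on n r f -> graded n r f ->
    exists (m : nat) (A : 'M[R]_(m.+1, n)),
      (m.+1 <= C * n * r)%N /\
      forall i j, in_Inr n r i j -> mu A i j = f i j.
Proof.
exists 1%N => R n r f hr hrn pos gr.
set m := (n * r).-1.
have hm : m.+1 = (n * r)%N by rewrite /m prednK // muln_gt0; apply/andP; split; lia.
exists m, (\matrix_(a < m.+1, c < n) (Wp r f a.+1 c - Wp r f a c)).
split; first by rewrite hm mul1n.
move=> i' j' hJ'.
set A := \matrix_(a < m.+1, c < n) (Wp r f a.+1 c - Wp r f a c).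
have hpre : forall k : 'I_m.+1,
    prefix_sum A i' j' k = \sum_(c < n | in_interval i' j' c) Wf r f k c.
  move=> k; rewrite /prefix_sum exchange_big; apply: eq_bigr => c _.
  have -> : \sum_(a < m.+1 | (a <= k)%N) A a c
      = \sum_(a < k.+1) (Wp r f a.+1 c - Wp r f a c).
    rewrite (big_ord_widen m.+1 (fun a => Wp r f a.+1 c - Wp r f a c) (ltn_ord k)).
    by apply: eq_big => // a _; rewrite mxE.
  by rewrite -(big_mkord xpredT (fun a => Wp r f a.+1 c - Wp r f a c)) telescope_sumr // subr0.
have fpos' := pos _ _ hJ'.
have hle : forall k : 'I_m.+1, prefix_sum A i' j' k <= f i' j'.
  move=> k; rewrite hpre /Wf.
  case: (inInrbP n r (k %/ r).+1 (k %/ r + k %% r).+1) => hk.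
    by have [] := @key R n r f _ _ _ _ pos gr hk hJ'.
  by rewrite big1 // ltW.
apply: le_anti; apply/andP; split.
  rewrite /mu; apply: (big_ind (fun x => x <= f i' j')) => //.
  by move=> x y hx hy; rewrite ge_max hx hy.
case: hJ' => h1 h2 h3 h4.
have hk0 : ((i'.-1 * r + (j' - i')) < m.+1)%N by rewrite hm; nia.
set k0 := Ordinal hk0.
have ediv : ((i'.-1 * r + (j' - i')) %/ r = i'.-1)%N.
  by rewrite divnMDl ?divn_small ?addn0 //; lia.
have emod : ((i'.-1 * r + (j' - i')) %% r = j' - i')%N.
  by rewrite modnMDl modn_small //; lia.
have e1 : (k0 %/ r).+1 = i' by rewrite /= ediv; lia.
have e2 : (k0 %/ r + k0 %% r).+1 = j' by rewrite /= ediv emod; lia.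
have : prefix_sum A i' j' k0 = f i' j'.
  rewrite hpre /Wf e1 e2.
  have hJ : in_Inr n r i' j' by split.
  case: (inInrbP n r i' j') => // _.
  by have [_ ->] := @key R n r f _ _ _ _ pos gr hJ hJ.
move=> <-; rewrite /mu; exact: maxbig_ge (mem_index_enum _).
Qed.
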